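(* Let $G$ be a cubical $\omega$-category with connections, and $1\le m\le n$. If $1\le i\le m$ then $\Phi_m\varepsilon_i=\varepsilon_1\Phi_{m-1}$ as maps $G_{n-1}\to G_n$. If $1\le i\le m-1$ then $\Phi_m\Gamma^\alpha_i=\varepsilon_1\Phi_{m-1}$ as maps $G_{n-1}\to G_n$, for $\alpha=\pm$.
   Context: A cubical $\omega$-category with connections $G$ consists of sets $G_n$ ($n\ge0$), face maps $\partial^\alpha_i:G_n\to G_{n-1}$, degeneracies $\varepsilon_i:G_{n-1}\to G_n$, connections $\Gamma^\alpha_i:G_n\to G_{n+1}$ ($1\le i\le n$, $\alpha=\pm$) and partial compositions $\circ_j$ on $G_n$ ($1\le j\le n$, $a\circ_jb$ defined iff $\partial^+_ja=\partial^-_jb$) satisfying: $\partial^\alpha_i\partial^\beta_j=\partial^\beta_{j-1}\partial^\alpha_i$ ($i<j$), $\varepsilon_i\varepsilon_j=\varepsilon_{j+1}\varepsilon_i$ ($i\le j$), $\partial^\alpha_i\varepsilon_j=\varepsilon_{j-1}\partial^\alpha_i$ ($i<j$), $\varepsilon_j\partial^\alpha_{i-1}$ ($i>j$), $\mathrm{id}$ ($i=j$); $\Gamma^\alpha_i\Gamma^\beta_j=\Gamma^\beta_{j+1}\Gamma^\alpha_i$ ($i<j$), $\Gamma^\alpha_i\Gamma^\alpha_i=\Gamma^\alpha_{i+1}\Gamma^\alpha_i$, $\Gamma^\alpha_i\varepsilon_j=\varepsilon_{j+1}\Gamma^\alpha_i$ ($i<j$), $\varepsilon_j\Gamma^\alpha_{i-1}$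 ($i>j$), $\Gamma^\alpha_j\varepsilon_j=\varepsilon_{j+1}\varepsilon_j$, $\partial^\alpha_i\Gamma^\beta_j=\Gamma^\beta_{j-1}\partial^\alpha_i$ ($i<j$), $\Gamma^\beta_j\partial^\alpha_{i-1}$ ($i>j+1$), $\partial^\alpha_j\Gamma^\alpha_j=\partial^\alpha_{j+1}\Gamma^\alpha_j=\mathrm{id}$, $\partial^\alpha_j\Gamma^{-\alpha}_j=\partial^\alpha_{j+1}\Gamma^{-\alpha}_j=\varepsilon_j\partial^\alpha_j$; $\partial^-_j(a\circ_jb)=\partial^-_ja$, $\partial^+_j(a\circ_jb)=\partial^+_jb$, $\partial^\alpha_i(a\circ_jb)=\partial^\alpha_ia\circ_{j-1}\partial^\alpha_ib$ ($i<j$), $\partial^\alpha_ia\circ_j\partial^\alpha_ib$ ($i>j$); interchange for $i\ne j$; $\varepsilon_i(a\circ_jb)=\varepsilon_ia\circ_{j+1}\varepsilon_ib$ ($i\le j$), $\varepsilon_ia\circ_j\varepsilon_ib$ ($i>j$); $\Gamma^\alpha_i(a\circ_jb)=\Gamma^\alpha_ia\circ_{j+1}\Gamma^\alpha_ib$ ($i<j$), $\Gamma^\alpha_ia\circ_j\Gamma^\alpha_ib$ ($i>j$); $\Gamma^+_j(a\circ_jb)=(\Gamma^+_ja\circ_j\varepsilon_ja)\circ_{j+1}(\varepsilon_{j+1}a\circ_j\Gamma^+_jb)$, $\Gamma^-_j(a\circ_jb)=(\Gamma^-_ja\circ_j\varepsilon_{j+1}b)\circ_{j+1}(\varepsilon_jb\circ_j\Gamma^-_jb)$;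 each $\circ_j$ is a category structure with identities $\varepsilon_jy$; $\Gamma^+_ix\circ_i\Gamma^-_ix=\varepsilon_{i+1}x$, $\Gamma^+_ix\circ_{i+1}\Gamma^-_ix=\varepsilon_ix$. Folding operations on $G_k$: $\psi_ix=\Gamma^+_i\partial^-_{i+1}x\circ_{i+1}x\circ_{i+1}\Gamma^-_i\partial^+_{i+1}x$ ($1\le i\le k-1$), $\Psi_r=\psi_{r-1}\cdots\psi_1$ ($1\le r\le k$), $\Phi_m=\Psi_1\Psi_2\cdots\Psi_m$ ($0\le m\le k$). *)

(* Defs.v *)
From Stdlib Require Import Arith.

(* Sign convention: alpha = true is "+", alpha = false is "-". *)

(* Indexing conventions (chosen so that all maps are well-typed without casts):
   - cf a i n   : G (S n) -> G n          is  d^a_i on G_{n+1}, valid for 1 <= i <= n+1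
   - ce i n     : G n -> G (S n)          is  eps_i : G_n -> G_{n+1}, valid for 1 <= i <= n+1
   - cg a i n   : G n -> G (S n)          is  Gamma^a_i on G_n, valid for 1 <= i <= n
   - cc j n     : G (S n) -> G (S n) -> G (S n)  is  o_j on G_{n+1}, valid for 1 <= j <= n+1;
     the partial composition is modelled as a total function whose value is only
     constrained when the arguments are composable (cc j n x y is junk otherwise). *)
Record cub_omega_cat := {
  cG :> nat -> Type;
  cf : bool -> nat -> forall n, cG (S n) -> cG n;
  ce : nat -> forall n, cG n -> cG (S n);
  cg : bool -> nat -> forall n, cG n -> cG (S n);
  cc : nat -> forall n, cG (S n) -> cG (S n) -> cG (S n);

  ax_ff : forall a b i j n (x : cG (S (S n))), 1 <= i -> i < j -> j <= S (S n) ->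
    cf a i n (cf b j (S n) x) = cf b (j - 1) n (cf a i (S n) x);
  ax_ee : forall i j n (x : cG n), 1 <= i -> i <= j -> j <= S n ->
    ce i (S n) (ce j n x) = ce (S j) (S n) (ce i n x);
  ax_fe_lt : forall a i j n (x : cG (S n)), 1 <= i -> i < j -> j <= S (S n) ->
    cf a i (S n) (ce j (S n) x) = ce (j - 1) n (cf a i n x);
  ax_fe_gt : forall a i j n (x : cG (S n)), 1 <= j -> j < i -> i <= S (S n) ->
    cf a i (S n) (ce j (S n) x) = ce j n (cf a (i - 1) n x);
  ax_fe_eq : forall a i n (x : cG n), 1 <= i -> i <= S n ->
    cf a i n (ce i n x) = x;
  ax_gg_lt : forall a b i j n (x : cG n), 1 <= i -> i < j -> j <= n ->
    cg a i (S n) (cg b j n x) = cg b (S j) (S n) (cg a i n x);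
  ax_gg_eq : forall a i n (x : cG n), 1 <= i -> i <= n ->
    cg a i (S n) (cg a i n x) = cg a (S i) (S n) (cg a i n x);
  ax_ge_lt : forall a i j n (x : cG n), 1 <= i -> i < j -> j <= S n ->
    cg a i (S n) (ce j n x) = ce (S j) (S n) (cg a i n x);
  ax_ge_gt : forall a i j n (x : cG n), 1 <= j -> j < i -> i <= S n ->
    cg a i (S n) (ce j n x) = ce j (S n) (cg a (i - 1) n x);
  ax_ge_eq : forall a j n (x : cG n), 1 <= j -> j <= S n ->
    cg a j (S n) (ce j n x) = ce (S j) (S n) (ce j n x);
  ax_fg_lt : forall a b i j n (x : cG (S n)), 1 <= i -> i < j -> j <= S n ->
    cf a i (S n) (cg b j (S n) x) = cg b (j - 1) n (cf a i n x);
  ax_fg_gt : forall a b i j n (x : cG (S n)), 1 <= j -> S j < i -> i <= S (S n) ->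
    cf a i (S n) (cg b j (S n) x) = cg b j n (cf a (i - 1) n x);
  ax_fg_same1 : forall a j n (x : cG n), 1 <= j -> j <= n ->
    cf a j n (cg a j n x) = x;
  ax_fg_same2 : forall a j n (x : cG n), 1 <= j -> j <= n ->
    cf a (S j) n (cg a j n x) = x;
  ax_fg_opp1 : forall a j n (x : cG (S n)), 1 <= j -> j <= S n ->
    cf a j (S n) (cg (negb a) j (S n) x) = ce j n (cf a j n x);
  ax_fg_opp2 : forall a j n (x : cG (S n)), 1 <= j -> j <= S n ->
    cf a (S j) (S n) (cg (negb a) j (S n) x) = ce j n (cf a j n x);
  ax_fc_minus : forall j n (x y : cG (S n)), 1 <= j -> j <= S n ->
    cf true j n x = cf false j n y -> cf false j n (cc j n x y) = cf false j n x;
  ax_fc_plus : forall j n (x y : cG (S n)), 1 <= j -> j <= S n ->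
    cf true j n x = cf false j n y -> cf true j n (cc j n x y) = cf true j n y;
  ax_fc_lt : forall a i j n (x y : cG (S (S n))), 1 <= i -> i < j -> j <= S (S n) ->
    cf true j (S n) x = cf false j (S n) y ->
    cf a i (S n) (cc j (S n) x y) = cc (j - 1) n (cf a i (S n) x) (cf a i (S n) y);
  ax_fc_gt : forall a i j n (x y : cG (S (S n))), 1 <= j -> j < i -> i <= S (S n) ->
    cf true j (S n) x = cf false j (S n) y ->
    cf a i (S n) (cc j (S n) x y) = cc j n (cf a i (S n) x) (cf a i (S n) y);
  ax_interchange : forall i j n (x y z w : cG (S n)),
    1 <= i -> i <= S n -> 1 <= j -> j <= S n -> i <> j ->
    cf true i n x = cf false i n y -> cf true i n z = cf false i n w ->
    cf true j n x = cf false j n z -> cf true j n y = cf false j n w ->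
    cc j n (cc i n x y) (cc i n z w) = cc i n (cc j n x z) (cc j n y w);
  ax_ec_le : forall i j n (x y : cG (S n)), 1 <= i -> i <= j -> j <= S n ->
    cf true j n x = cf false j n y ->
    ce i (S n) (cc j n x y) = cc (S j) (S n) (ce i (S n) x) (ce i (S n) y);
  ax_ec_gt : forall i j n (x y : cG (S n)), 1 <= j -> j < i -> i <= S (S n) ->
    cf true j n x = cf false j n y ->
    ce i (S n) (cc j n x y) = cc j (S n) (ce i (S n) x) (ce i (S n) y);
  ax_gc_lt : forall a i j n (x y : cG (S n)), 1 <= i -> i < j -> j <= S n ->
    cf true j n x = cf false j n y ->
    cg a i (S n) (cc j n x y) = cc (S j) (S n) (cg a i (S n) x) (cg a i (S n) y);
  ax_gc_gt : forall a i j n (x y : cG (S n)), 1 <= j -> j < i -> i <= S n ->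
    cf true j n x = cf false j n y ->
    cg a i (S n) (cc j n x y) = cc j (S n) (cg a i (S n) x) (cg a i (S n) y);
  ax_gc_plus : forall j n (x y : cG (S n)), 1 <= j -> j <= S n ->
    cf true j n x = cf false j n y ->
    cg true j (S n) (cc j n x y) =
      cc (S j) (S n) (cc j (S n) (cg true j (S n) x) (ce j (S n) x))
                     (cc j (S n) (ce (S j) (S n) x) (cg true j (S n) y));
  ax_gc_minus : forall j n (x y : cG (S n)), 1 <= j -> j <= S n ->
    cf true j n x = cf false j n y ->
    cg false j (S n) (cc j n x y) =
      cc (S j) (S n) (cc j (S n) (cg false j (S n) x) (ce (S j) (S n) y))
                     (cc j (S n) (ce j (S n) y) (cg false j (S n) y));
  ax_assoc : forall j n (x y z : cG (S n)), 1 <= j -> j <= S n ->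
    cf true j n x = cf false j n y -> cf true j n y = cf false j n z ->
    cc j n (cc j n x y) z = cc j n x (cc j n y z);
  ax_idl : forall j n (x : cG (S n)), 1 <= j -> j <= S n ->
    cc j n (ce j n (cf false j n x)) x = x;
  ax_idr : forall j n (x : cG (S n)), 1 <= j -> j <= S n ->
    cc j n x (ce j n (cf true j n x)) = x;
  ax_gg_comp1 : forall i n (x : cG (S n)), 1 <= i -> i <= S n ->
    cc i (S n) (cg true i (S n) x) (cg false i (S n) x) = ce (S i) (S n) x;
  ax_gg_comp2 : forall i n (x : cG (S n)), 1 <= i -> i <= S n ->
    cc (S i) (S n) (cg true i (S n) x) (cg false i (S n) x) = ce i (S n) x
}.

Arguments cf {c} a i n _.
Arguments ce {c} i n _.
Arguments cg {c} a i n _.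
Arguments cc {c} j n _ _.

Section Folding.
Variable G : cub_omega_cat.

(* psi_i x = Gamma^+_i d^-_{i+1} x o_{i+1} x o_{i+1} Gamma^-_i d^+_{i+1} x
   on G_k (meaningful for 1 <= i <= k-1, so k >= 2); identity on G_0, G_1. *)
Definition psi (i : nat) (k : nat) : G k -> G k :=
  match k as k0 return G k0 -> G k0 with
  | S (S n) => fun x =>
      cc (S i) (S n)
         (cc (S i) (S n) (cg true i (S n) (cf false (S i) (S n) x)) x)
         (cg false i (S n) (cf true (S i) (S n) x))
  | _ => fun x => x
  end.

Fixpoint psi_comp (r : nat) (k : nat) (x : G k) : G k :=
  match r with
  | O => x
  | S r' => psi r k (psi_comp r' k x)
  end.

Definition Psi (r : nat) (k : nat) (x : G k) : G k := psi_comp (r - 1) k x.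

Fixpoint Phi (m : nat) (k : nat) (x : G k) : G k :=
  match m with
  | O => x
  | S m' => Phi m' k (Psi (S m') k x)
  end.
End Folding.

Arguments psi {G} i k _.
Arguments Psi {G} r k _.
Arguments Phi {G} m k _.

(* Main.v *)
Require Import Defs.
From Stdlib Require Import Arith Lia.


Lemma ff' (G : cub_omega_cat) a b i j n (x : G (S (S n))) : 1 <= i -> i <= j -> S j <= S (S n) ->
  cf a i n (cf b (S j) (S n) x) = cf b j n (cf a i (S n) x).
Proof. intros. rewrite ax_ff by lia. simpl. rewrite Nat.sub_0_r. reflexivity. Qed.
Lemma fe_lt' (G : cub_omega_cat) a i j n (x : G (S n)) : 1 <= i -> i <= j -> S j <= S (S n) ->
  cf a i (S n) (ce (S j) (S n) x) = ce j n (cf a i n x).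
Proof. intros. rewrite ax_fe_lt by lia. simpl. rewrite Nat.sub_0_r. reflexivity. Qed.
Lemma fe_gt' (G : cub_omega_cat) a i j n (x : G (S n)) : 1 <= j -> j <= i -> S i <= S (S n) ->
  cf a (S i) (S n) (ce j (S n) x) = ce j n (cf a i n x).
Proof. intros. rewrite ax_fe_gt by lia. simpl. rewrite Nat.sub_0_r. reflexivity. Qed.
Lemma ge_gt' (G : cub_omega_cat) a i j n (x : G n) : 1 <= j -> j <= i -> S i <= S n ->
  cg a (S i) (S n) (ce j n x) = ce j (S n) (cg a i n x).
Proof. intros. rewrite ax_ge_gt by lia. simpl. rewrite Nat.sub_0_r. reflexivity. Qed.
Lemma fg_lt' (G : cub_omega_cat) a b i j n (x : G (S n)) : 1 <= i -> i <= j -> S j <= S n ->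
  cf a i (S n) (cg b (S j) (S n) x) = cg b j n (cf a i n x).
Proof. intros. rewrite ax_fg_lt by lia. simpl. rewrite Nat.sub_0_r. reflexivity. Qed.
Lemma fg_gt' (G : cub_omega_cat) a b i j n (x : G (S n)) : 1 <= j -> S j <= i -> S i <= S (S n) ->
  cf a (S i) (S n) (cg b j (S n) x) = cg b j n (cf a i n x).
Proof. intros. rewrite ax_fg_gt by lia. simpl. rewrite Nat.sub_0_r. reflexivity. Qed.
Lemma fc_lt' (G : cub_omega_cat) a i j n (x y : G (S (S n))) : 1 <= i -> i <= j -> S j <= S (S n) ->
  cf true (S j) (S n) x = cf false (S j) (S n) y ->
  cf a i (S n) (cc (S j) (S n) x y) = cc j n (cf a i (S n) x) (cf a i (S n) y).
Proof. intros. rewrite ax_fc_lt by (auto; lia). simpl. rewrite Nat.sub_0_r. reflexivity. Qed.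
Lemma opp1_tf (G : cub_omega_cat) j n (x : G (S n)) : 1 <= j -> j <= S n ->
  cf true j (S n) (cg false j (S n) x) = ce j n (cf true j n x).
Proof. apply (ax_fg_opp1 G true). Qed.
Lemma opp1_ft (G : cub_omega_cat) j n (x : G (S n)) : 1 <= j -> j <= S n ->
  cf false j (S n) (cg true j (S n) x) = ce j n (cf false j n x).
Proof. apply (ax_fg_opp1 G false). Qed.
Lemma opp2_tf (G : cub_omega_cat) j n (x : G (S n)) : 1 <= j -> j <= S n ->
  cf true (S j) (S n) (cg false j (S n) x) = ce j n (cf true j n x).
Proof. apply (ax_fg_opp2 G true). Qed.
Lemma opp2_ft (G : cub_omega_cat) j n (x : G (S n)) : 1 <= j -> j <= S n ->
  cf false (S j) (S n) (cg true j (S n) x) = ce j n (cf false j n x).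
Proof. apply (ax_fg_opp2 G false). Qed.
Lemma idl' (G : cub_omega_cat) j n (x : G (S n)) y : 1 <= j -> j <= S n -> y = cf false j n x ->
  cc j n (ce j n y) x = x.
Proof. intros; subst; apply ax_idl; lia. Qed.
Lemma idr' (G : cub_omega_cat) j n (x : G (S n)) y : 1 <= j -> j <= S n -> y = cf true j n x ->
  cc j n x (ce j n y) = x.
Proof. intros; subst; apply ax_idr; lia. Qed.

Ltac ar := lia.
Ltac fsimp :=
  repeat (first
   [ rewrite ax_fe_eq by ar
   | rewrite fe_lt' by ar
   | rewrite fe_gt' by ar
   | rewrite ax_fg_same1 by ar
   | rewrite ax_fg_same2 by ar
   | rewrite opp1_tf by ar
   | rewrite opp1_ft by ar
   | rewrite opp2_tf by ar
   | rewrite opp2_ft by ar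
   | rewrite fg_lt' by ar
   | rewrite fg_gt' by ar
   | rewrite ax_fc_minus by (first [ar | fsimp; reflexivity])
   | rewrite ax_fc_plus by (first [ar | fsimp; reflexivity])
   | rewrite fc_lt' by (first [ar | fsimp; reflexivity])
   | rewrite ax_fc_gt by (first [ar | fsimp; reflexivity])
   | rewrite ff' by ar
   | rewrite idl' by (first [ar | fsimp; reflexivity])
   | rewrite idr' by (first [ar | fsimp; reflexivity])
   | rewrite ax_gg_comp1 by ar
   | rewrite ax_gg_comp2 by ar
   ]).
Ltac sc := first [ar | fsimp; reflexivity].

Lemma psiE (G : cub_omega_cat) i n (x : G (S (S n))) :
  psi i (S (S n)) x = cc (S i) (S n) (cc (S i) (S n) (cg true i (S n) (cf false (S i) (S n) x)) x)
     (cg false i (S n) (cf true (S i) (S n) x)).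
Proof. reflexivity. Qed.

Lemma psi_e_lt (G : cub_omega_cat) i j n (x : G (S (S n))) : 1 <= j -> j <= i -> S i <= S (S n) ->
  psi (S i) (S (S (S n))) (ce j (S (S n)) x) = ce j (S (S n)) (psi i (S (S n)) x).
Proof.
  intros. rewrite !psiE. fsimp.
  rewrite !ge_gt' by ar.
  rewrite <- ax_ec_le by sc. rewrite <- ax_ec_le by sc. reflexivity.
Qed.

Lemma psi_e_eq (G : cub_omega_cat) i n (x : G (S n)) : 1 <= i -> i <= S n ->
  psi i (S (S n)) (ce i (S n) x) = ce i (S n) x.
Proof.
  intros. rewrite psiE. fsimp. rewrite !ax_ge_eq by ar. fsimp. reflexivity.
Qed.

Lemma psi_e_succ (G : cub_omega_cat) i n (x : G (S n)) : 1 <= i -> i <= S n ->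
  psi i (S (S n)) (ce (S i) (S n) x) = ce i (S n) x.
Proof.
  intros. rewrite psiE. fsimp. reflexivity.
Qed.

Lemma psi_e_gt (G : cub_omega_cat) i j n (x : G (S (S n))) : 1 <= i -> i <= j -> S (S j) <= S (S (S n)) -> i <= S n ->
  psi i (S (S (S n))) (ce (S (S j)) (S (S n)) x) = ce (S (S j)) (S (S n)) (psi i (S (S n)) x).
Proof.
  intros. rewrite !psiE. fsimp.
  rewrite !ax_ge_lt by ar.
  rewrite <- ax_ec_gt by sc. rewrite <- ax_ec_gt by sc. reflexivity.
Qed.

Lemma psi_g_eq (G : cub_omega_cat) a i n (x : G (S n)) : 1 <= i -> i <= S n ->
  psi i (S (S n)) (cg a i (S n) x) = ce i (S n) x.
Proof.
  intros. rewrite psiE. destruct a; fsimp; rewrite ?ax_ge_eq by ar; fsimp; reflexivity.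
Qed.

Lemma psi_g_gt (G : cub_omega_cat) a i j n (x : G (S (S n))) : 1 <= i -> i <= j -> S (S j) <= S (S n) ->
  psi i (S (S (S n))) (cg a (S (S j)) (S (S n)) x) = cg a (S (S j)) (S (S n)) (psi i (S (S n)) x).
Proof.
  intros. rewrite !psiE. fsimp.
  rewrite !ax_gg_lt by ar.
  rewrite (ax_gg_lt G false a i (S j)) by ar.
  rewrite <- ax_gc_gt by sc. rewrite <- ax_gc_gt by sc. reflexivity.
Qed.

Lemma psi_g_lt (G : cub_omega_cat) a i j n (x : G (S (S n))) : 1 <= j -> S j <= i -> S i <= S (S n) ->
  psi (S i) (S (S (S n))) (cg a j (S (S n)) x) = cg a j (S (S n)) (psi i (S (S n)) x).
Proof.
  intros. rewrite !psiE. fsimp.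
  rewrite <- !(ax_gg_lt G a true j i) by ar.
  rewrite <- (ax_gg_lt G a false j i) by ar.
  rewrite <- ax_gc_lt by sc. rewrite <- ax_gc_lt by sc. reflexivity.
Qed.


Ltac unl := repeat match goal with x := _ |- _ => subst x end.
Ltac sc2 := first [ar | unl; fsimp; reflexivity].

Lemma sub9m (G : cub_omega_cat) i q (X : G (S (S q))) : 1 <= i -> i <= S q ->
  cc (S (S i)) (S (S q))
    (cc (S i) (S (S q)) (cg true (S i) (S (S q)) X) (cg false i (S (S q)) X))
    (cg false (S i) (S (S q)) (cc (S i) (S q) X (cg false i (S q) (cf true (S i) (S q) X)))) =
  cg false i (S (S q)) (cc (S i) (S q) X (cg false i (S q) (cf true (S i) (S q) X))).
Proof.
  intros.
  rewrite ax_gc_minus by sc2.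
  rewrite <- ax_assoc by sc2.
  rewrite (ax_interchange G (S i) (S (S i)) (S (S q))) by sc2.
  rewrite (ax_gg_comp2 G (S i) (S q) X) by ar.
  rewrite (idr' G (S (S i)) (S (S q)) (cg false i (S (S q)) X)) by sc2.
  rewrite (idl' G (S i) (S (S q)) (cg false i (S (S q)) X)) by sc2.
  rewrite <- (idl' G (S i) (S (S q)) (cg false i (S (S q)) X) X) at 1 by sc2.
  rewrite (ax_interchange G (S i) (S (S i)) (S (S q))) by sc2.
  rewrite <- (ax_ec_le G (S i) (S i) (S q)) by sc2.
  rewrite <- (ax_gg_eq G false i (S q)) by ar.
  rewrite <- (ax_gc_lt G false i (S i) (S q)) by sc2.
  rewrite idl' by sc2.
  reflexivity.
Qed.

Lemma L8p (G : cub_omega_cat) i q (X : G (S (S q))) : 1 <= i -> i <= S q ->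
  psi (S i) (S (S (S q))) (psi i (S (S (S q))) (cg true (S i) (S (S q)) X)) =
  cg false i (S (S q)) (psi i (S (S q)) X).
Proof.
  intros.
  rewrite (psiE G i (S q)). rewrite (psiE G (S i) (S q)).
  rewrite (psiE G i q).
  fsimp.
  rewrite ge_gt' by ar. rewrite ax_ge_lt by ar.
  rewrite ax_assoc by sc2.
  rewrite (ax_assoc G (S i) (S q) (cg true i (S q) (cf false (S i) (S q) X)) X) by sc2.
  rewrite ax_gc_minus by sc2.
  rewrite (ax_assoc G (S i) (S (S q)) (ce (S (S i)) (S (S q)) (cg true i (S q) (cf false (S i) (S q) X)))) by sc2.
  set (w := cf false (S i) (S q) X).
  set (v := cf true (S i) (S q) X).
  set (A := cg true i (S q) w).
  set (C := cg false i (S q) v).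
  set (D := cc (S i) (S q) X C).
  set (Zr := cc (S i) (S (S q)) (cg true (S i) (S (S q)) X) (cg false i (S (S q)) X)).
  set (Q1 := cc (S i) (S (S q)) (cg false (S i) (S (S q)) A) (ce (S (S i)) (S (S q)) D)).
  set (Q2 := cc (S i) (S (S q)) (ce (S i) (S (S q)) D) (cg false (S i) (S (S q)) D)).
  rewrite <- (ax_assoc G (S (S i)) (S (S q)) (cc (S i) (S (S q)) (ce (S (S i)) (S (S q)) A) Zr) Q1 Q2) by sc2.
  subst Q1.
  rewrite (ax_interchange G (S i) (S (S i)) (S (S q)) (ce (S (S i)) (S (S q)) A) Zr) by sc2.
  rewrite (idl' G (S (S i)) (S (S q)) (cg false (S i) (S (S q)) A) A) by sc2.
  rewrite (idr' G (S (S i)) (S (S q)) Zr D) by sc2.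
  subst Q2.
  rewrite (ax_interchange G (S i) (S (S i)) (S (S q)) (cg false (S i) (S (S q)) A) Zr) by sc2.
  subst Zr D C v. rewrite sub9m by ar.
  set (D := cc (S i) (S q) X (cg false i (S q) (cf true (S i) (S q) X))).
  rewrite <- (ax_gg_comp2 G i (S q) A) by ar.
  rewrite (ax_interchange G (S i) (S (S i)) (S (S q)) (cg true i (S (S q)) A)) by sc2.
  rewrite <- (ax_assoc G (S (S i)) (S (S q)) (cg true i (S (S q)) A)) by sc2.
  subst A. rewrite (ax_gg_eq G true i (S q)) by ar.
  rewrite (ax_gg_comp2 G (S i) (S q)) by ar.
  rewrite <- (ax_ec_le G (S i) (S i) (S q)) by sc2.
  rewrite <- (ax_gc_lt G false i (S i) (S q)) by sc2.
  rewrite idl' by sc2.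
  reflexivity.
Qed.

Lemma sub9p (G : cub_omega_cat) i q (X : G (S (S q))) : 1 <= i -> i <= S q ->
  cc (S (S i)) (S (S q))
    (cg true (S i) (S (S q)) (cc (S i) (S q) (cg true i (S q) (cf false (S i) (S q) X)) X))
    (cc (S i) (S (S q)) (cg true i (S (S q)) X) (cg false (S i) (S (S q)) X)) =
  cg true i (S (S q)) (cc (S i) (S q) (cg true i (S q) (cf false (S i) (S q) X)) X).
Proof.
  intros.
  rewrite ax_gc_plus by sc2.
  rewrite ax_assoc by sc2.
  rewrite (ax_interchange G (S i) (S (S i)) (S (S q))) by sc2.
  rewrite (idl' G (S (S i)) (S (S q)) (cg true i (S (S q)) X)) by sc2.
  rewrite (ax_gg_comp2 G (S i) (S q) X) by ar.
  rewrite (idr' G (S i) (S (S q)) (cg true i (S (S q)) X)) by sc2.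
  rewrite (idr' G (S i) (S (S q)) (cg true (S i) (S (S q)) _)) by sc2.
  rewrite <- (ax_gg_eq G true i (S q)) by ar.
  rewrite <- (ax_gc_lt G true i (S i) (S q)) by sc2.
  reflexivity.
Qed.

Lemma L8m (G : cub_omega_cat) i q (X : G (S (S q))) : 1 <= i -> i <= S q ->
  psi (S i) (S (S (S q))) (psi i (S (S (S q))) (cg false (S i) (S (S q)) X)) =
  cg true i (S (S q)) (psi i (S (S q)) X).
Proof.
  intros.
  rewrite (psiE G i (S q)). rewrite (psiE G (S i) (S q)).
  rewrite (psiE G i q).
  fsimp.
  rewrite ge_gt' by ar. rewrite ax_ge_lt by ar.
  rewrite ax_gc_plus by sc2.
  set (E := cc (S i) (S q) (cg true i (S q) (cf false (S i) (S q) X)) X).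
  set (C := cg false i (S q) (cf true (S i) (S q) X)).
  set (Zl := cc (S i) (S (S q)) (cg true i (S (S q)) X) (cg false (S i) (S (S q)) X)).
  set (R1 := cc (S i) (S (S q)) (cg true (S i) (S (S q)) E) (ce (S i) (S (S q)) E)).
  set (R2 := cc (S i) (S (S q)) (ce (S (S i)) (S (S q)) E) (cg true (S i) (S (S q)) C)).
  rewrite (ax_assoc G (S (S i)) (S (S q)) R1 R2) by sc2.
  subst R2.
  rewrite (ax_interchange G (S i) (S (S i)) (S (S q)) (ce (S (S i)) (S (S q)) E)) by sc2.
  rewrite (idl' G (S (S i)) (S (S q)) Zl E) by sc2.
  rewrite (idr' G (S (S i)) (S (S q)) (cg true (S i) (S (S q)) C) C) by sc2.
  subst R1.
  rewrite (ax_interchange G (S i) (S (S i)) (S (S q)) (cg true (S i) (S (S q)) E)) by sc2.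
  subst Zl E. rewrite sub9p by ar.
  set (E := cc (S i) (S q) (cg true i (S q) (cf false (S i) (S q) X)) X).
  rewrite <- (ax_gg_comp2 G i (S q) C) by ar.
  rewrite (ax_interchange G (S i) (S (S i)) (S (S q)) (cg true i (S (S q)) E)) by sc2.
  rewrite <- (ax_gc_lt G true i (S i) (S q)) by sc2.
  rewrite (ax_assoc G (S (S i)) (S (S q)) (ce (S i) (S (S q)) E)) by sc2.
  subst C. rewrite (ax_gg_eq G false i (S q)) by ar.
  rewrite (ax_gg_comp2 G (S i) (S q)) by ar.
  rewrite <- (ax_ec_le G (S i) (S i) (S q)) by sc2.
  rewrite idr' by sc2.
  reflexivity.
Qed.


Lemma gE1 (G : cub_omega_cat) k (x : G k) i j : 1 <= j -> j < i -> i <= k ->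
  psi i (S k) (ce j k x) = ce j k (psi (i - 1) k x).
Proof.
  intros. destruct k as [|[|n]]; try lia. destruct i as [|i']; try lia.
  replace (S i' - 1) with i' by lia. apply psi_e_lt; lia.
Qed.
Lemma gE2 (G : cub_omega_cat) k (x : G k) i : 1 <= i -> i <= k ->
  psi i (S k) (ce i k x) = ce i k x.
Proof. intros. destruct k as [|n]; try lia. apply psi_e_eq; lia. Qed.
Lemma gE3 (G : cub_omega_cat) k (x : G k) i : 1 <= i -> i <= k ->
  psi i (S k) (ce (S i) k x) = ce i k x.
Proof. intros. destruct k as [|n]; try lia. apply psi_e_succ; lia. Qed.
Lemma gE4 (G : cub_omega_cat) k (x : G k) i j : 1 <= i -> S i < j -> j <= S k ->
  psi i (S k) (ce j k x) = ce j k (psi i k x).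
Proof.
  intros. destruct k as [|[|n]]; try lia. destruct j as [|[|j']]; try lia.
  apply psi_e_gt; lia.
Qed.
Lemma gG1 (G : cub_omega_cat) k (x : G k) a i : 1 <= i -> i <= k ->
  psi i (S k) (cg a i k x) = ce i k x.
Proof. intros. destruct k as [|n]; try lia. apply psi_g_eq; lia. Qed.
Lemma gG2 (G : cub_omega_cat) k (x : G k) a i j : 1 <= i -> S i < j -> j <= k ->
  psi i (S k) (cg a j k x) = cg a j k (psi i k x).
Proof.
  intros. destruct k as [|[|n]]; try lia. destruct j as [|[|j']]; try lia.
  apply psi_g_gt; lia.
Qed.
Lemma gG3 (G : cub_omega_cat) k (x : G k) a i j : 1 <= j -> S j < i -> i <= k ->
  psi i (S k) (cg a j k x) = cg a j k (psi (i - 1) k x).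
Proof.
  intros. destruct k as [|[|n]]; try lia. destruct i as [|i']; try lia.
  replace (S i' - 1) with i' by lia. apply psi_g_lt; lia.
Qed.
Lemma gL8 (G : cub_omega_cat) k (x : G k) a i : 1 <= i -> S i <= k ->
  psi (S i) (S k) (psi i (S k) (cg a (S i) k x)) = cg (negb a) i k (psi i k x).
Proof.
  intros. destruct k as [|[|q]]; try lia. destruct a; simpl.
  - apply L8p; lia.
  - apply L8m; lia.
Qed.

Lemma Ae (G : cub_omega_cat) k (x : G k) l j : l + 2 <= j -> j <= S k ->
  psi_comp G l (S k) (ce j k x) = ce j k (psi_comp G l k x).
Proof.
  induction l; intros; simpl; auto.
  rewrite IHl by lia. apply gE4; lia.
Qed.
Lemma Ag (G : cub_omega_cat) k (x : G k) a l j : l + 2 <= j -> j <= k ->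
  psi_comp G l (S k) (cg a j k x) = cg a j k (psi_comp G l k x).
Proof.
  induction l; intros; simpl; auto.
  rewrite IHl by lia. apply gG2; lia.
Qed.

Lemma Pe1 (G : cub_omega_cat) k (x : G k) r : 1 <= r -> r <= k ->
  psi_comp G r (S k) (ce 1 k x) = ce 1 k (psi_comp G (r - 1) k x).
Proof.
  induction r; intros; try lia.
  destruct r as [|r].
  - simpl. apply gE2; lia.
  - change (psi_comp G (S (S r)) (S k) (ce 1 k x)) with
      (psi (S (S r)) (S k) (psi_comp G (S r) (S k) (ce 1 k x))).
    rewrite IHr by lia. rewrite gE1 by lia.
    replace (S (S r) - 1) with (S r) by lia. replace (S r - 1) with r by lia.
    reflexivity.
Qed.

Lemma Pej (G : cub_omega_cat) k (x : G k) j d : 2 <= j -> j - 1 + d <= k ->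
  psi_comp G (j - 1 + d) (S k) (ce j k x) = ce (j - 1) k (psi_comp G (j - 1 + d - 1) k x).
Proof.
  induction d; intros.
  - destruct j as [|[|j']]; try lia.
    replace (S (S j') - 1 + 0) with (S j') by lia.
    change (psi_comp G (S j') (S k) (ce (S (S j')) k x)) with
      (psi (S j') (S k) (psi_comp G j' (S k) (ce (S (S j')) k x))).
    rewrite Ae by lia. rewrite gE3 by lia.
    replace (S (S j') - 1) with (S j') by lia. replace (S j' - 1) with j' by lia.
    reflexivity.
  - replace (j - 1 + S d) with (S (j - 1 + d)) by lia.
    change (psi_comp G (S (j - 1 + d)) (S k) (ce j k x)) with
      (psi (S (j - 1 + d)) (S k) (psi_comp G (j - 1 + d) (S k) (ce j k x))).
    rewrite IHd by lia. rewrite gE1 by lia.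
    replace (S (j - 1 + d) - 1) with (j - 1 + d) by lia.
    destruct (j - 1 + d) as [|e] eqn:He; try lia.
    replace (S e - 1) with e by lia. reflexivity.
Qed.

Lemma Psi_e (G : cub_omega_cat) k (x : G k) r j : 1 <= j -> j <= r -> 2 <= r -> r <= S k ->
  exists j', 1 <= j' /\ j' <= r - 1 /\ Psi r (S k) (ce j k x) = ce j' k (Psi (r - 1) k x).
Proof.
  intros. unfold Psi.
  destruct (Nat.eq_dec j 1) as [->|Hj].
  - exists 1. split; [lia|split;[lia|]].
    rewrite Pe1 by lia. replace (r - 1 - 1) with (r - 2) by lia. reflexivity.
  - exists (j - 1). split; [lia|split;[lia|]].
    replace (psi_comp G (r - 1) (S k) (ce j k x)) with (psi_comp G (j - 1 + (r - j)) (S k) (ce j k x))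
      by (f_equal; lia).
    rewrite Pej by lia. f_equal. f_equal. lia.
Qed.

Lemma Pg1 (G : cub_omega_cat) k (x : G k) a r : 1 <= r -> r <= k ->
  psi_comp G r (S k) (cg a 1 k x) = ce 1 k (psi_comp G (r - 1) k x).
Proof.
  induction r; intros; try lia.
  destruct r as [|r].
  - simpl. apply gG1; lia.
  - change (psi_comp G (S (S r)) (S k) (cg a 1 k x)) with
      (psi (S (S r)) (S k) (psi_comp G (S r) (S k) (cg a 1 k x))).
    rewrite IHr by lia. rewrite gE1 by lia.
    replace (S (S r) - 1) with (S r) by lia. replace (S r - 1) with r by lia.
    reflexivity.
Qed.

Lemma Pgj (G : cub_omega_cat) k (x : G k) a j d : 2 <= j -> j + d <= k ->
  psi_comp G (j + d) (S k) (cg a j k x) = cg (negb a) (j - 1) k (psi_comp G (j + d - 1) k x).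
Proof.
  induction d; intros.
  - destruct j as [|[|j']]; try lia.
    replace (S (S j') + 0) with (S (S j')) by lia.
    change (psi_comp G (S (S j')) (S k) (cg a (S (S j')) k x)) with
      (psi (S (S j')) (S k) (psi (S j') (S k) (psi_comp G j' (S k) (cg a (S (S j')) k x)))).
    rewrite Ag by lia. rewrite gL8 by lia.
    replace (S (S j') - 1) with (S j') by lia. replace (S (S j') - 1) with (S j') by lia.
    reflexivity.
  - replace (j + S d) with (S (j + d)) by lia.
    change (psi_comp G (S (j + d)) (S k) (cg a j k x)) with
      (psi (S (j + d)) (S k) (psi_comp G (j + d) (S k) (cg a j k x))).
    rewrite IHd by lia. rewrite gG3 by lia.
    replace (S (j + d) - 1) with (j + d) by lia.
    destruct (j + d) as [|e] eqn:He; try lia.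
    replace (S e - 1) with e by lia. reflexivity.
Qed.

Lemma Psi_g1 (G : cub_omega_cat) k (x : G k) a r : 2 <= r -> r <= S k ->
  Psi r (S k) (cg a 1 k x) = ce 1 k (Psi (r - 1) k x).
Proof.
  intros. unfold Psi. rewrite Pg1 by lia. reflexivity.
Qed.

Lemma Psi_gj (G : cub_omega_cat) k (x : G k) a r j : 2 <= j -> j <= r - 1 -> r <= S k ->
  Psi r (S k) (cg a j k x) = cg (negb a) (j - 1) k (Psi (r - 1) k x).
Proof.
  intros. unfold Psi.
  replace (psi_comp G (r - 1) (S k) (cg a j k x)) with (psi_comp G (j + (r - 1 - j)) (S k) (cg a j k x))
    by (f_equal; lia).
  rewrite Pgj by lia. f_equal. f_equal; try lia.
Qed.

Lemma Phi_e (G : cub_omega_cat) m : forall k i (x : G k), 1 <= i -> i <= m -> m <= S k ->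
  Phi m (S k) (ce i k x) = ce 1 k (Phi (m - 1) k x).
Proof.
  induction m as [|m IH]; intros k i x H1 H2 H3; try lia.
  change (Phi (S m) (S k) (ce i k x)) with (Phi m (S k) (Psi (S m) (S k) (ce i k x))).
  destruct m as [|m].
  - replace i with 1 by lia. reflexivity.
  - destruct (Psi_e G k x (S (S m)) i) as [j' [Hj1 [Hj2 E]]]; try lia.
    rewrite E. rewrite IH by lia.
    replace (S (S m) - 1) with (S m) by lia. simpl. rewrite ?Nat.sub_0_r. reflexivity.
Qed.

Lemma Phi_g (G : cub_omega_cat) m : forall k a i (x : G k), 1 <= i -> i <= m - 1 -> m <= S k ->
  Phi m (S k) (cg a i k x) = ce 1 k (Phi (m - 1) k x).
Proof.
  induction m as [|m IH]; intros k a i x H1 H2 H3; try lia.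
  change (Phi (S m) (S k) (cg a i k x)) with (Phi m (S k) (Psi (S m) (S k) (cg a i k x))).
  destruct m as [|m]; try lia.
  destruct (Nat.eq_dec i 1) as [->|Hi].
  - rewrite Psi_g1 by lia. rewrite Phi_e by lia.
    replace (S (S m) - 1) with (S m) by lia. simpl. rewrite ?Nat.sub_0_r. reflexivity.
  - rewrite Psi_gj by lia. rewrite IH by lia.
    replace (S (S m) - 1) with (S m) by lia. simpl. rewrite ?Nat.sub_0_r. reflexivity.
Qed.

Theorem theorem5p6 (G : cub_omega_cat) (m k : nat) :
  1 <= m -> m <= S k ->
  (forall i, 1 <= i -> i <= m -> forall x : G k,
      Phi m (S k) (ce i k x) = ce 1 k (Phi (m - 1) k x)) /\
  (forall (a : bool) i, 1 <= i -> i <= m - 1 -> forall x : G k,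
      Phi m (S k) (cg a i k x) = ce 1 k (Phi (m - 1) k x)).
Proof.
  intros Hm Hk. split.
  - intros i H1 H2 x. apply Phi_e; lia.
  - intros a i H1 H2 x. apply Phi_g; lia.
Qed.
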